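(* For every $n \geq 1$ we have $$\mathrm{OW}_n(\mathbb{C}) \subseteq \mathrm{SODECO}_n(\mathbb{C}) \subseteq \overline{\mathrm{OW}_n(\mathbb{C})},$$ and both inclusions are strict for every $n \geq 2$.
   Context: Identify a symmetric tensor $S\in\mathbb{C}^{n\times n\times n}$ with the cubic form $f(x)=\sum_{i,j,k}S_{ijk}x_ix_jx_k\in\mathbb{C}[x_1,\dots,x_n]_3$ (homogeneous polynomials of degree 3). A matrix $A\in M_n(\mathbb{C})$ is orthogonal if $A^TA=\mathrm{Id}_n$. $\mathrm{OW}_n(\mathbb{C})$ is the set of $f\in\mathbb{C}[x_1,\dots,x_n]_3$ that can be written $f(x)=g(Ax)$ with $A$ a complex orthogonal matrix and $g=\alpha_1x_1^3+\cdots+\alpha_nx_n^3$, $\alpha_i\in\mathbb{C}$. On $\mathbb{C}^n$ use the bilinear (non-Hermitian) form $\langle x,y\rangle=\sum_i x_iy_i$; ''orthogonal'' vectors means $\langle u,v\rangle=0$. $\mathrm{SODECO}_n(\mathbb{C})$ is the set of symmetric tensors (equivalently cubic forms) that can be written $\sum_{i=1}^k v_i^{\otimes 3}$ where $v_1,\dots,v_k\in\mathbb{C}^n$ are linearly independent and pairwise orthogonal. The closure $\overline{\mathrm{OW}_n(\mathbb{C})}$ is taken in the usual (Euclidean) topology of $\mathbb{C}[x_1,\dots,x_n]_3$. *)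

(* Defs.v *)
(* The complex field is modelled by an arbitrary
   numClosedFieldType C. *)
From HB Require Import structures.
From mathcomp Require Import all_boot all_order all_algebra.
Set Implicit Arguments. Unset Strict Implicit. Unset Printing Implicit Defensive.
Import Order.TTheory GRing.Theory Num.Theory.
Local Open Scope ring_scope.

Definition tensor3 (C : Type) (n : nat) := 'I_n -> 'I_n -> 'I_n -> C.

Definition sym_tensor (C : Type) (n : nat) (S : tensor3 C n) : Prop :=
  forall i j k, S i j k = S j i k /\ S i j k = S i k j.

Definition cubic_form (C : numClosedFieldType) (n : nat) (S : tensor3 C n)
    (x : 'cV[C]_n) : C :=
  \sum_(i < n) \sum_(j < n) \sum_(k < n) S i j k * x i 0 * x j 0 * x k 0.

Definition orthogonal_mx (C : numClosedFieldType) (n : nat) (A : 'M[C]_n) : Prop :=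
  A^T *m A = 1%:M.

Definition OW (C : numClosedFieldType) (n : nat) (S : tensor3 C n) : Prop :=
  sym_tensor S /\
  exists (A : 'M[C]_n) (alpha : 'I_n -> C),
    orthogonal_mx A /\
    forall x : 'cV[C]_n,
      cubic_form S x = \sum_(i < n) alpha i * ((A *m x) i 0) ^+ 3.

(* Bilinear (non-Hermitian) form <u,v> = sum_i u_i v_i. *)
Definition bil (C : numClosedFieldType) (n : nat) (u v : 'rV[C]_n) : C :=
  \sum_(i < n) u 0 i * v 0 i.

Definition SODECO (C : numClosedFieldType) (n : nat) (S : tensor3 C n) : Prop :=
  exists (k : nat) (V : 'M[C]_(k, n)),
    row_free V /\
    (forall i j : 'I_k, i != j -> bil (row i V) (row j V) = 0) /\
    forall a b c : 'I_n, S a b c = \sum_(i < k) V i a * V i b * V i c.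

(* Closure in the Euclidean topology of the finite-dimensional space of
   tensors (max-norm on entries). *)
Definition eclosure (C : numClosedFieldType) (n : nat) (P : tensor3 C n -> Prop)
    (S : tensor3 C n) : Prop :=
  forall eps : C, 0 < eps ->
    exists T : tensor3 C n, P T /\ forall a b c, `|S a b c - T a b c| < eps.

(* Main.v *)
Require Import Defs.
From HB Require Import structures.
From mathcomp Require Import all_boot all_order all_algebra.
From mathcomp Require Import ring.
Import Order.TTheory GRing.Theory Num.Theory.
Set Implicit Arguments. Unset Strict Implicit. Unset Printing Implicit Defensive.
Local Open Scope ring_scope.

Lemma AAT_entry (C : numClosedFieldType) m p n (A : 'M[C]_(m, n)) (B : 'M[C]_(p, n)) i j :
  (A *m B^T) i j = \sum_(a < n) A i a * B j a.
Proof. by rewrite mxE; apply: eq_bigr => a _; rewrite mxE. Qed.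

Definition Bform (C : numClosedFieldType) (n : nat) (D : tensor3 C n)
  (x y z : 'cV[C]_n) : C :=
  \sum_(i < n) \sum_(j < n) \sum_(k < n) D i j k * x i 0 * y j 0 * z k 0.

Lemma BD1 (C : numClosedFieldType) n (D : tensor3 C n) x1 x2 y z :
  Bform D (x1 + x2) y z = Bform D x1 y z + Bform D x2 y z.
Proof.
rewrite /Bform -big_split; apply: eq_bigr => i _; rewrite -big_split.
apply: eq_bigr => j _; rewrite -big_split; apply: eq_bigr => k _.
by rewrite !mxE mulrDr !mulrDl.
Qed.

Lemma BS12 (C : numClosedFieldType) n (D : tensor3 C n) x y z :
  sym_tensor D -> Bform D x y z = Bform D y x z.
Proof.
move=> hD; rewrite /Bform exchange_big; apply: eq_bigr => i _.
apply: eq_bigr => j _; apply: eq_bigr => k _.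
rewrite (proj1 (hD j i k)); ring.
Qed.

Lemma BS23 (C : numClosedFieldType) n (D : tensor3 C n) x y z :
  sym_tensor D -> Bform D x y z = Bform D x z y.
Proof.
move=> hD; rewrite /Bform; apply: eq_bigr => i _.
rewrite exchange_big; apply: eq_bigr => j _; apply: eq_bigr => k _.
rewrite (proj2 (hD i k j)); ring.
Qed.

Lemma BD2 (C : numClosedFieldType) n (D : tensor3 C n) x y1 y2 z :
  sym_tensor D -> Bform D x (y1 + y2) z = Bform D x y1 z + Bform D x y2 z.
Proof. by move=> hD; rewrite (BS12 x _ _ hD) BD1 (BS12 y1 _ _ hD) (BS12 y2 _ _ hD). Qed.

Lemma BD3 (C : numClosedFieldType) n (D : tensor3 C n) x y z1 z2 :
  sym_tensor D -> Bform D x y (z1 + z2) = Bform D x y z1 + Bform D x y z2.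
Proof. by move=> hD; rewrite (BS23 x y _ hD) BD2 // (BS23 x z1 _ hD) (BS23 x z2 _ hD). Qed.

Lemma cubicB (C : numClosedFieldType) n (D : tensor3 C n) x :
  cubic_form D x = Bform D x x x.
Proof. by []. Qed.

Lemma polar6 (C : numClosedFieldType) n (D : tensor3 C n) x y z :
  sym_tensor D ->
  6%:R * Bform D x y z =
  Bform D (x + y + z) (x + y + z) (x + y + z) - Bform D (x + y) (x + y) (x + y)
  - Bform D (x + z) (x + z) (x + z)
  - Bform D (y + z) (y + z) (y + z) + Bform D x x x + Bform D y y y + Bform D z z z.
Proof.
move=> hD.
rewrite !BD1.
rewrite !BD2 //.
rewrite !BD3 //.
rewrite -(BS23 z x y hD) -(BS12 x z y hD) -(BS23 y x z hD) -(BS12 x y z hD) -(BS23 x y z hD).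
rewrite -(BS12 x y x hD) -(BS23 x x y hD) -(BS23 y x y hD) -(BS12 x y y hD) -(BS12 x z x hD) -(BS23 x x z hD) -(BS23 z x z hD) -(BS12 x z z hD) -(BS12 y z y hD) -(BS23 y y z hD) -(BS23 z y z hD) -(BS12 y z z hD) .
ring.
Qed.

Lemma Bdelta (C : numClosedFieldType) n (D : tensor3 C n) a b c :
  Bform D (delta_mx a 0) (delta_mx b 0) (delta_mx c 0) = D a b c.
Proof.
rewrite /Bform (bigD1 a) //= [X in _ + X]big1 ?addr0; last first.
  move=> i hi; apply: big1 => j _; apply: big1 => k _.
  by rewrite !mxE (negbTE hi) /= !mulr0 !mul0r.
rewrite (bigD1 b) //= [X in _ + X]big1 ?addr0; last first.
  move=> j hj; apply: big1 => k _.
  by rewrite !mxE (negbTE hj) /= !mulr0 !mul0r.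
rewrite (bigD1 c) //= [X in _ + X]big1 ?addr0; last first.
  by move=> k hk; rewrite !mxE (negbTE hk) /= !mulr0.
by rewrite !mxE !eqxx /= !mulr1.
Qed.

Lemma polar (C : numClosedFieldType) n (D : tensor3 C n) :
  sym_tensor D -> (forall x, cubic_form D x = 0) -> forall a b c, D a b c = 0.
Proof.
move=> hD h0 a b c.
have := polar6 (delta_mx a 0) (delta_mx b 0) (delta_mx c 0) hD.
rewrite -!cubicB !h0 !subr0 !addr0 Bdelta => /eqP.
by rewrite mulf_eq0 pnatr_eq0 /= => /eqP.
Qed.

Lemma cubic_sub (C : numClosedFieldType) n (S T : tensor3 C n) x :
  cubic_form (fun a b c => S a b c - T a b c) x = cubic_form S x - cubic_form T x.
Proof.
rewrite /cubic_form -sumrB; apply: eq_bigr => i _; rewrite -sumrB.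
apply: eq_bigr => j _; rewrite -sumrB; apply: eq_bigr => k _.
by rewrite !mulrBl.
Qed.

Lemma sym_diff (C : numClosedFieldType) n (S T : tensor3 C n) :
  sym_tensor S -> sym_tensor T -> sym_tensor (fun a b c => S a b c - T a b c).
Proof.
move=> hS hT i j k; case: (hS i j k) => -> ->; case: (hT i j k) => -> ->.
by split.
Qed.

Lemma cubic_eq (C : numClosedFieldType) n (S T : tensor3 C n) :
  sym_tensor S -> sym_tensor T -> (forall x, cubic_form S x = cubic_form T x) ->
  forall a b c, S a b c = T a b c.
Proof.
move=> hS hT h a b c; apply/eqP; rewrite -subr_eq0; apply/eqP.
apply: (polar (D := fun a b c => S a b c - T a b c)) (sym_diff hS hT) _ a b c.
by move=> x; rewrite cubic_sub h subrr.
Qed.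

Definition ctens (C : numClosedFieldType) n (A : 'M[C]_n) (alpha : 'I_n -> C) : tensor3 C n :=
  fun a b c => \sum_(i < n) alpha i * A i a * A i b * A i c.

Lemma ctens_sym (C : numClosedFieldType) n (A : 'M[C]_n) alpha : sym_tensor (ctens A alpha).
Proof.
move=> a b c; rewrite /ctens; split; apply: eq_bigr => i _; ring.
Qed.

Lemma cube_sum (C : numClosedFieldType) n (u : 'I_n -> C) :
  (\sum_(a < n) u a) ^+ 3 = \sum_(a < n) \sum_(b < n) \sum_(c < n) u a * u b * u c.
Proof.
transitivity (\sum_(a < n) u a * ((\sum_(b < n) u b) * (\sum_(c < n) u c))).
  by rewrite -mulr_suml exprS expr2.
apply: eq_bigr => a _; rewrite mulr_suml mulr_sumr; apply: eq_bigr => b _.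
by rewrite mulrA mulr_sumr.
Qed.

Lemma ctens_cubic (C : numClosedFieldType) n (A : 'M[C]_n) alpha x :
  cubic_form (ctens A alpha) x = \sum_(i < n) alpha i * ((A *m x) i 0) ^+ 3.
Proof.
rewrite /cubic_form /ctens.
rewrite [RHS](eq_bigr (fun i => \sum_(a < n) \sum_(b < n) \sum_(c < n)
   alpha i * A i a * A i b * A i c * x a 0 * x b 0 * x c 0)); last first.
  move=> i _; rewrite mxE cube_sum mulr_sumr; apply: eq_bigr => a _.
  rewrite mulr_sumr; apply: eq_bigr => b _; rewrite mulr_sumr.
  by apply: eq_bigr => c _; ring.
rewrite [RHS]exchange_big; apply: eq_bigr => a _.
rewrite [RHS]exchange_big; apply: eq_bigr => b _.
rewrite [RHS]exchange_big; apply: eq_bigr => c _.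
by rewrite !mulr_suml; apply: eq_bigr => i _.
Qed.

Lemma orth_AAT (C : numClosedFieldType) n (A : 'M[C]_n) :
  orthogonal_mx A -> A *m A^T = 1%:M.
Proof. by move=> h; apply: mulmx1C. Qed.

Lemma OW_ctens (C : numClosedFieldType) n (S : tensor3 C n) :
  OW S -> exists A alpha, orthogonal_mx A /\ forall a b c, S a b c = ctens A alpha a b c.
Proof.
case=> hS [A [alpha [hA hf]]]; exists A, alpha; split => //.
apply: cubic_eq => //; first exact: ctens_sym.
by move=> x; rewrite hf ctens_cubic.
Qed.

Lemma ctens_OW (C : numClosedFieldType) n (A : 'M[C]_n) alpha :
  orthogonal_mx A -> OW (ctens A alpha).
Proof.
move=> hA; split; first exact: ctens_sym.
by exists A, alpha; split => // x; rewrite ctens_cubic.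
Qed.

Lemma part1 (C : numClosedFieldType) n (S : tensor3 C n) : OW S -> SODECO S.
Proof.
move=> /OW_ctens [A [alpha [hA hS]]].
have hAA := orth_AAT hA.
set P := [pred i | alpha i != 0].
pose ev := (@enum_val _ P).
pose beta := fun i => 3.-root (alpha i).
have hb3 : forall i, beta i ^+ 3 = alpha i by move=> i; rewrite /beta rootCK.
have hb0 : forall r, beta (ev r) != 0.
  move=> r; have := enum_valP r; rewrite inE -hb3.
  by apply: contra => /eqP ->; rewrite expr0n.
exists #|P|, (\matrix_(r, a) (beta (ev r) * A (ev r) a)).
have AA : forall r s, \sum_(a < n) A (ev r) a * A (ev s) a = (r == s)%:R.
  move=> r s; rewrite -AAT_entry hAA mxE.
  by rewrite (inj_eq (@enum_val_inj _ P)).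
split; last split.
- apply/row_freeP; exists (\matrix_(a, r) ((beta (ev r))^-1 * A (ev r) a)).
  apply/matrixP => r s; rewrite mxE.
  rewrite (eq_bigr (fun a => beta (ev r) * (beta (ev s))^-1 * (A (ev r) a * A (ev s) a))); last first.
    by move=> a _; rewrite !mxE; ring.
  rewrite -mulr_sumr AA !mxE; case: eqP => [->|_]; last by rewrite mulr0.
  by rewrite mulr1 mulfV.
- move=> r s hrs; rewrite /bil.
  rewrite (eq_bigr (fun a => beta (ev r) * beta (ev s) * (A (ev r) a * A (ev s) a))); last first.
    by move=> a _; rewrite !mxE; ring.
  by rewrite -mulr_sumr AA (negbTE hrs) mulr0.
- move=> a b c; rewrite hS /ctens.
  rewrite (bigID P) /= [X in _ + X]big1 ?addr0; last first.
    by move=> i /negPn/eqP ->; rewrite !mul0r.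
  rewrite big_enum_val; apply: eq_bigr => r _; rewrite !mxE -hb3 -/(ev r); ring.
Qed.

Lemma ext1 (C : numClosedFieldType) k n (M : 'M[C]_(k, n)) :
  M *m M^T = 1%:M -> (k < n)%N ->
  exists x : 'rV[C]_n, M *m x^T = 0 /\ x *m x^T = 1%:M.
Proof.
move=> hM hkn.
set P := 1%:M - M^T *m M.
have PT : P^T = P by rewrite /P linearB /= trmx1 trmx_mul trmxK.
have Psym : forall a b, P a b = P b a by move=> a b; rewrite -{1}PT mxE.
have PP : P *m P = P.
  rewrite /P mulmxBl mul1mx mulmxBr mulmx1 -!mulmxA (mulmxA M) hM mul1mx.
  by rewrite subrr subr0.
have MP : M *m P = 0 by rewrite /P mulmxBr mulmx1 mulmxA hM mul1mx subrr.
have trP : \tr P = (n - k)%:R.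
  rewrite /P linearB /= mxtrace1 mxtrace_mulC hM mxtrace1 natrB //.
  exact: ltnW.
have [j hj] : exists j, P j j != 0.
  apply/existsP; apply: contraT; rewrite negb_exists => /forallP h.
  move: trP; rewrite /mxtrace big1 => [/esym/eqP|i _]; last first.
    by move: (h i); rewrite negbK => /eqP.
  by rewrite pnatr_eq0 subn_eq0 leqNgt hkn.
set s := sqrtC (P j j).
have s0 : s != 0 by rewrite /s sqrtC_eq0.
have s2 : s ^+ 2 = P j j by rewrite sqrtCK.
exists (s^-1 *: row j P); split.
  apply/matrixP => i l; rewrite ord1 AAT_entry !mxE.
  rewrite (eq_bigr (fun a => s^-1 * (M i a * P a j))); last first.
    by move=> a _; rewrite (Psym a j) !mxE; ring.
  have e : (M *m P) i j = \sum_a M i a * P a j by rewrite mxE.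
  by rewrite -mulr_sumr -e MP mxE mulr0.
apply/matrixP => i l; rewrite !ord1 AAT_entry !mxE /=.
rewrite (eq_bigr (fun a => s^-1 * s^-1 * (P j a * P^T a j))); last first.
  by move=> a _; rewrite [P^T a j]mxE !mxE; ring.
have e : (P *m P^T) j j = \sum_a P j a * P^T a j by rewrite mxE.
rewrite -mulr_sumr -e PT PP -s2; field; exact: s0.
Qed.

Lemma bil_mx (C : numClosedFieldType) n (u v : 'rV[C]_n) : bil u v = (u *m v^T) 0 0.
Proof. by rewrite AAT_entry. Qed.

Lemma bilC (C : numClosedFieldType) n (u v : 'rV[C]_n) : bil u v = bil v u.
Proof. by rewrite /bil; apply: eq_bigr => a _; rewrite mulrC. Qed.

Lemma ext_all (C : numClosedFieldType) n : forall d k (f : nat -> 'rV[C]_n),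
  (k + d = n)%N ->
  (forall i j, (i < k)%N -> (j < k)%N -> bil (f i) (f j) = (i == j)%:R) ->
  exists g : nat -> 'rV[C]_n, (forall i, (i < k)%N -> g i = f i) /\
    (forall i j, (i < n)%N -> (j < n)%N -> bil (g i) (g j) = (i == j)%:R).
Proof.
elim => [|d IH] k f hkd hf.
  by exists f; split=> // i j hi hj; apply: hf; [move: hi | move: hj]; rewrite -hkd addn0.
pose M := \matrix_(i < k, a < n) f i 0 a.
have hM : M *m M^T = 1%:M.
  apply/matrixP => i j; rewrite AAT_entry !mxE -(hf i j) ?ltn_ord //.
  by apply: eq_bigr => a _; rewrite !mxE.
have hkn : (k < n)%N by rewrite -hkd addnS ltnS leq_addr.
have [x [hx1 hx2]] := ext1 hM hkn.
pose f' := fun i => if i == k then x else f i.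
have h1 : (k.+1 + d = n)%N by rewrite addSnnS.
have h2 : forall i j, (i < k.+1)%N -> (j < k.+1)%N -> bil (f' i) (f' j) = (i == j)%:R.
  move=> i j hi hj; rewrite /f'.
  have hxf : forall j, (j < k)%N -> bil x (f j) = 0.
    move=> j0 hj0; rewrite bilC bil_mx.
    have -> : f j0 = row (Ordinal hj0) M.
      by apply/rowP => a; rewrite !mxE.
    by rewrite -row_mul hx1 !mxE.
  case: (eqVneq i k) => [ei|hik]; case: (eqVneq j k) => [ej|hjk]; subst.
  + by rewrite bil_mx hx2 !mxE !eqxx.
  + rewrite hxf; last by rewrite ltn_neqAle hjk -ltnS.
    by rewrite eq_sym (negbTE hjk).
  + rewrite bilC hxf; last by rewrite ltn_neqAle hik -ltnS.
    by rewrite (negbTE hik).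

  + by apply: hf; rewrite ltn_neqAle ?hik ?hjk -ltnS.
have [g [hg1 hg2]] := IH k.+1 f' h1 h2.
exists g; split => // i hi; rewrite hg1 /f' ?(ltn_eqF hi) //; exact: ltnW.
Qed.

Lemma OW_ext (C : numClosedFieldType) n (S T : tensor3 C n) :
  (forall a b c, S a b c = T a b c) -> OW T -> OW S.
Proof.
move=> h [hT [A [alpha [hA hf]]]]; split.
  by move=> i j k; rewrite !h; apply: hT.
exists A, alpha; split => // x; rewrite -hf /cubic_form.
apply: eq_bigr => i _; apply: eq_bigr => j _; apply: eq_bigr => k _.
by rewrite h.
Qed.

Lemma bilZ (C : numClosedFieldType) n (u v : 'rV[C]_n) a b :
  bil (a *: u) (b *: v) = a * b * bil u v.
Proof.
by rewrite /bil mulr_sumr; apply: eq_bigr => i _; rewrite !mxE; ring.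
Qed.

Lemma OW_of_orth (C : numClosedFieldType) n k (c : 'I_k -> 'rV[C]_n) (mu : 'I_k -> C) :
  (k <= n)%N -> (forall i j, i != j -> bil (c i) (c j) = 0) ->
  (forall i, bil (c i) (c i) != 0) ->
  OW (fun a b d => \sum_(i < k) mu i * c i 0 a * c i 0 b * c i 0 d).
Proof.
move=> hkn hor hnz.
pose s i := sqrtC (bil (c i) (c i)).
have s0 : forall i, s i != 0 by move=> i; rewrite /s sqrtC_eq0.
have s2 : forall i, s i ^+ 2 = bil (c i) (c i) by move=> i; rewrite /s sqrtCK.
pose f (i : nat) : 'rV[C]_n := oapp (fun j => (s j)^-1 *: c j) 0 (insub i).
have hf : forall i j, (i < k)%N -> (j < k)%N -> bil (f i) (f j) = (i == j)%:R.
  move=> i j hi hj; rewrite /f.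
  case: insubP => [i' _ ei|]; last by rewrite hi.
  case: insubP => [j' _ ej|]; last by rewrite hj.
  rewrite /= bilZ -ei -ej.
  case: (eqVneq i' j') => [<-|hne].
    by rewrite eqxx -s2 /=; field; apply: s0.
  by rewrite hor // mulr0 (inj_eq val_inj) (negbTE hne).
have [g [hg1 hg2]] := ext_all (subnKC hkn) hf.
pose A := \matrix_(i < n, a < n) g i 0 a.
have hA : orthogonal_mx A.
  rewrite /orthogonal_mx; apply: mulmx1C; apply/matrixP => i j.
  rewrite AAT_entry !mxE -(hg2 i j) ?ltn_ord //.
  by apply: eq_bigr => a _; rewrite !mxE.
pose alpha (i : 'I_n) := oapp (fun j => mu j * s j ^+ 3) 0 (insub (val i)).
apply: (OW_ext _ (ctens_OW alpha hA)) => a b d.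
rewrite /ctens.
pose F (i : nat) := oapp (fun j => mu j * c j 0 a * c j 0 b * c j 0 d) 0 (insub i).
have L : \sum_(i < k) mu i * c i 0 a * c i 0 b * c i 0 d = \sum_(i < k) F i.
  by apply: eq_bigr => i _; rewrite /F valK.
have R : forall i : 'I_n, alpha i * A i a * A i b * A i d = F i.
  move=> i; rewrite /alpha /F !mxE.
  case: (ltnP i k) => hik.
    rewrite hg1 // /f; case: insubP => [j _ ej|]; last by rewrite hik.
    by rewrite /= !mxE; field; apply: s0.
  by rewrite insubF /= ?mul0r // ltnNge hik.
rewrite L (eq_bigr _ (fun i _ => R i)) (big_ord_widen n F hkn) big_mkcond /=.
apply: eq_bigr => i _; case: ifP => // hik.
by rewrite /F insubF.
Qed.

Lemma small_t (C : numClosedFieldType) (eps K : C) : 0 < eps -> 0 <= K ->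
  exists t : C, [/\ 0 < t, t <= 1 & t * K < eps].
Proof.
move=> he hK.
have hD : 0 < eps + K + 1 by apply: lt_le_trans he _; rewrite -addrA lerDl addr_ge0 // ler01.
exists (eps / (eps + K + 1)); split.
- by rewrite divr_gt0.
- by rewrite ler_pdivrMr // mul1r -addrA lerDl addr_ge0 // ler01.
- rewrite mulrAC ltr_pdivrMr // ltr_pM2l //.
  by rewrite [eps + K]addrC -addrA ltrDl addr_gt0 // ltr01.
Qed.

Lemma norm_le_add (C : numClosedFieldType) (y y' t : C) : `|t| <= 1 ->
  `|y + t * y'| <= `|y| + `|y'|.
Proof.
move=> ht; apply: le_trans (ler_normD _ _) _; rewrite lerD2l normrM.
by apply: ler_piMl.
Qed.

Lemma cube_err (C : numClosedFieldType) (x y z x' y' z' t : C) : `|t| <= 1 ->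
  `|x * y * z - (x + t * x') * (y + t * y') * (z + t * z')| <=
  `|t| * (3%:R * ((`|x| + `|x'|) * (`|y| + `|y'|) * (`|z| + `|z'|))).
Proof.
move=> ht.
have -> : x * y * z - (x + t * x') * (y + t * y') * (z + t * z') =
   - (t * (x' * (y + t * y') * (z + t * z')) + t * (x * y' * (z + t * z')) +
      t * (x * y * z')) by ring.
rewrite normrN.
set K := (`|x| + `|x'|) * (`|y| + `|y'|) * (`|z| + `|z'|).
have nx : `|x| <= `|x| + `|x'| by rewrite lerDl.
have nx' : `|x'| <= `|x| + `|x'| by rewrite lerDr.
have ny : `|y| <= `|y| + `|y'| by rewrite lerDl.
have ny' : `|y'| <= `|y| + `|y'| by rewrite lerDr.
have nz : `|z| <= `|z| + `|z'| by rewrite lerDl.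
have nz' : `|z'| <= `|z| + `|z'| by rewrite lerDr.
have nyt := norm_le_add y y' ht.
have nzt := norm_le_add z z' ht.
have b1 : `|x'| * `|y + t * y'| * `|z + t * z'| <= K.
  by rewrite /K; apply: ler_pM; rewrite ?mulr_ge0 //; apply: ler_pM.
have b2 : `|x| * `|y'| * `|z + t * z'| <= K.
  by rewrite /K; apply: ler_pM; rewrite ?mulr_ge0 //; apply: ler_pM.
have b3 : `|x| * `|y| * `|z'| <= K.
  by rewrite /K; apply: ler_pM; rewrite ?mulr_ge0 //; apply: ler_pM.
apply: le_trans (ler_normD _ _) _.
apply: le_trans (lerD (ler_normD _ _) (lexx _)) _.
rewrite !normrM -!mulrDr ler_wpM2l //.
have -> : 3%:R * K = K + K + K by rewrite -[3%N]/(1 + 1 + 1)%N !natrD !mulrDl !mul1r.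
by apply: lerD => //; apply: lerD.
Qed.

Lemma le_sum_term (C : numClosedFieldType) (I : finType) (F : I -> C) i :
  (forall j, 0 <= F j) -> F i <= \sum_j F j.
Proof.
by move=> h; rewrite (bigD1 i) //= lerDl sumr_ge0.
Qed.

Lemma perturb (C : numClosedFieldType) k n (V : 'M[C]_(k, n)) :
  row_free V -> (forall i j, i != j -> bil (row i V) (row j V) = 0) ->
  exists (Z : 'M[C]_(k, n)) (e : 'rV[C]_k),
    (forall i, e 0 i = if (V *m V^T) i i == 0 then 1 else 0) /\
    forall t : C, (V + t *: Z) *m (V + t *: Z)^T = V *m V^T + (2%:R * t) *: diag_mx e.
Proof.
move=> hfree horth.
set G := V *m V^T.
have Gij : forall i j, i != j -> G i j = 0.
  move=> i j hij; have := horth i j hij; rewrite /bil => <-.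
  by rewrite /G AAT_entry; apply: eq_bigr => a _; rewrite !mxE.
pose er := \row_i (if G i i == 0 then (1 : C) else 0).
exists (let E := diag_mx er in
        let: exist R _ := sig_eqW (row_freeP hfree) in
        let Y := E *m R^T in let N := Y *m Y^T in Y - (2%:R)^-1 *: (N *m V)).
exists er; split.
  by move=> i; rewrite mxE.
case: (sig_eqW (row_freeP hfree)) => R hR /=.
set E := diag_mx er; set Y := E *m R^T; set N := Y *m Y^T.
set Z := Y - (2%:R)^-1 *: (N *m V).
have GT : G^T = G by rewrite /G trmx_mul trmxK.
have ET : E^T = E by rewrite tr_diag_mx.
have EE : E *m E = E.
  rewrite /E mulmx_diag; congr diag_mx; apply/rowP => i; rewrite !mxE.
  by case: ifP; rewrite ?mulr1 ?mulr0.
have GE : G *m E = 0.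
  apply/matrixP => i j; rewrite mul_mx_diag mxE [er 0 j]mxE [(0 : 'M[C]_k) i j]mxE.
  case: (eqVneq i j) => [<-|hij]; last by rewrite Gij // mul0r.
  by case: eqP => [->|_]; rewrite ?mul0r ?mulr0.
have EG : E *m G = 0 by rewrite -[E]ET -GT -trmx_mul GE trmx0.
have VYT : V *m Y^T = E by rewrite /Y trmx_mul trmxK ET mulmxA hR mul1mx.
have YVT : Y *m V^T = E by rewrite -[Y]trmxK -trmx_mul VYT ET.
have NT : N^T = N by rewrite /N trmx_mul trmxK.
have EN : E *m N = N by rewrite /N /Y !mulmxA EE.
have NE : N *m E = N by rewrite -[N]NT -[E]ET -trmx_mul EN.
have GN : G *m N = 0 by rewrite /N /Y !mulmxA GE !mul0mx.
have VZT : V *m Z^T = E.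
  rewrite /Z linearB /= linearZ /= (trmx_mul N V) NT mulmxBr -scalemxAr mulmxA -/G GN.
  by rewrite scaler0 subr0 VYT.
have ZVT : Z *m V^T = E by rewrite -[Z]trmxK -trmx_mul VZT ET.
have ZZT : Z *m Z^T = 0.
  rewrite {1}/Z mulmxBl -scalemxAl -(mulmxA N V) VZT NE.
  rewrite /Z linearB /= linearZ /= (trmx_mul N V) NT mulmxBr -scalemxAr mulmxA YVT EN -/N.
  rewrite -{1}[N]scale1r -!scalerBl.
  have -> : 1 - (2%:R)^-1 - (2%:R)^-1 = 0 :> C.
    by field.
  by rewrite scale0r.
move=> t.
clearbody Z.
rewrite linearD /= linearZ /= mulmxDl !mulmxDr -!scalemxAl -!scalemxAr ZZT VZT ZVT.
rewrite !scaler0 addr0 -/G -addrA; congr (_ + _).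
by rewrite -scalerDl mulr_natl mulr2n.
Qed.

Lemma bil_row (C : numClosedFieldType) k n (A : 'M[C]_(k, n)) i j :
  bil (row i A) (row j A) = (A *m A^T) i j.
Proof. by rewrite AAT_entry /bil; apply: eq_bigr => a _; rewrite !mxE. Qed.

Lemma part2 (C : numClosedFieldType) n (S : tensor3 C n) :
  SODECO S -> eclosure (@OW C n) S.
Proof.
case=> k [V [hfree [horth hS]]] eps he.
have hkn : (k <= n)%N.
  by move: hfree; rewrite /row_free => /eqP <-; apply: rank_leq_col.
have [Z [e [he1 hVt]]] := perturb hfree horth.
have Gij : forall i j, i != j -> (V *m V^T) i j = 0.
  move=> i j hij; have := horth i j hij; rewrite /bil => <-.
  by rewrite AAT_entry; apply: eq_bigr => a _; rewrite !mxE.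
pose K3 a b d := \sum_(i < k) 3%:R * ((`|V i a| + `|Z i a|) * (`|V i b| + `|Z i b|)
                                     * (`|V i d| + `|Z i d|)).
have K3ge0 : forall a b d, 0 <= K3 a b d.
  by move=> a b d; apply: sumr_ge0 => i _; rewrite !mulr_ge0 ?addr_ge0 ?ler0n.
pose Ktot := \sum_a \sum_b \sum_d K3 a b d.
have K3le : forall a b d, K3 a b d <= Ktot.
  move=> a b d; apply: le_trans (le_sum_term a _) => [|a'].
    apply: le_trans (le_sum_term b _) => [|b'].
      by apply: le_sum_term.
    by apply: sumr_ge0.
  by apply: sumr_ge0 => ? _; apply: sumr_ge0.
have Ktot0 : 0 <= Ktot.
  by apply: sumr_ge0 => a _; apply: sumr_ge0 => b _; apply: sumr_ge0.
have [t [t0 t1 tK]] := small_t he Ktot0.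
have nt : `|t| = t by rewrite gtr0_norm.
have nt1 : `|t| <= 1 by rewrite nt.
set Vt := V + t *: Z.
exists (fun a b d => \sum_(i < k) (fun _ => 1) i * row i Vt 0 a * row i Vt 0 b * row i Vt 0 d).
split.
  apply: OW_of_orth => //.
    move=> i j hij; rewrite bil_row hVt mxE [((2%:R * t) *: diag_mx e) i j]mxE [diag_mx e i j]mxE.
    by rewrite Gij // (negbTE hij) mulr0n mulr0 addr0.
  move=> i; rewrite bil_row hVt mxE [((2%:R * t) *: diag_mx e) i i]mxE [diag_mx e i i]mxE eqxx mulr1n he1.
  case: (eqVneq ((V *m V^T) i i) 0) => [->|hG]; first by rewrite add0r mulr1 mulf_neq0 ?pnatr_eq0 // gt_eqF.
  by rewrite mulr0 addr0.
move=> a b d; apply: le_lt_trans tK.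
apply: le_trans (ler_wpM2l (ltW t0) (K3le a b d)).
rewrite hS -sumrB; apply: le_trans (ler_norm_sum _ _ _) _.
rewrite /K3 mulr_sumr; apply: ler_sum => i _.
rewrite !mxE !mul1r.
by have := cube_err (V i a) (V i b) (V i d) (Z i a) (Z i b) (Z i d) nt1; rewrite nt.
Qed.



Lemma sum2 (C : numClosedFieldType) n' (f : nat -> C) :
  (forall j, (2 <= j)%N -> f j = 0) -> \sum_(j < n'.+2) f j = f 0%N + f 1%N.
Proof.
move=> h; rewrite 2!big_ord_recl big1 ?addr0 //= => j _.
by apply: h.
Qed.

Lemma bil_lin (C : numClosedFieldType) n (x y z v : 'rV[C]_n) a b :
  bil (x + a *: y) (z + b *: v) = bil x z + b * bil x v + a * bil y z + a * b * bil y v.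
Proof.
have Dl : forall p q r : 'rV[C]_n, bil (p + q) r = bil p r + bil q r.
  by move=> p q r; rewrite /bil -big_split; apply: eq_bigr => i _; rewrite !mxE mulrDl.
have Zl : forall c (p r : 'rV[C]_n), bil (c *: p) r = c * bil p r.
  by move=> c p r; rewrite /bil mulr_sumr; apply: eq_bigr => i _; rewrite !mxE mulrA.
rewrite Dl Zl (bilC x) (bilC y) !Dl !Zl (bilC z) (bilC v) (bilC z y) (bilC v y).
ring.
Qed.

Lemma notOW_cube (C : numClosedFieldType) n (w : 'rV[C]_n) a0 :
  bil w w = 0 -> w 0 a0 != 0 -> ~ OW (fun a b d => w 0 a * w 0 b * w 0 d).
Proof.
move=> hww hw0 /OW_ctens [A [alpha [hA hS]]].
have hAA := orth_AAT hA.
have h1 : (\row_i alpha i) *m A = 0.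
  apply/rowP => a; rewrite !mxE.
  have : \sum_b (w 0 a * w 0 b * w 0 b) = 0.
    rewrite (eq_bigr (fun b => w 0 a * (w 0 b * w 0 b))); last by move=> b _; rewrite mulrA.
    by rewrite -mulr_sumr -/(bil w w) hww mulr0.
  rewrite (eq_bigr (fun b => ctens A alpha a b b)); last by move=> b _; rewrite hS.
  rewrite /ctens exchange_big /= => h; rewrite -[RHS]h; apply: eq_bigr => i _; rewrite mxE.
  rewrite (eq_bigr (fun b => alpha i * A i a * (A i b * A i b))); last by move=> b _; ring.
  by rewrite -mulr_sumr -AAT_entry hAA !mxE eqxx mulr1.
have h2 : (\row_i alpha i) = 0.
  by rewrite -[LHS]mulmx1 -hAA mulmxA h1 mul0mx.
have := hS a0 a0 a0; rewrite /ctens big1 => [|i _]; last first.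
  by have := congr1 (fun M : 'rV_n => M 0 i) h2; rewrite !mxE => ->; rewrite !mul0r.
by move/eqP; rewrite !mulf_eq0 (negbTE hw0).
Qed.

Lemma sodeco_cube (C : numClosedFieldType) n (w : 'rV[C]_n) :
  w != 0 -> SODECO (fun a b d => w 0 a * w 0 b * w 0 d).
Proof.
move=> hw; exists 1%N, w; split; last split.
- by rewrite /row_free rank_rV hw.
- by move=> i j; rewrite !ord1 eqxx.
- by move=> a b d; rewrite big_ord1.
Qed.

Definition S3 (C : numClosedFieldType) n (w u : 'rV[C]_n) : tensor3 C n :=
  fun a b d => w 0 a * w 0 b * u 0 d + w 0 a * u 0 b * w 0 d + u 0 a * w 0 b * w 0 d.

Lemma sodeco_psi (C : numClosedFieldType) k n (V : 'M[C]_(k, n)) (phi : 'I_n -> C) :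
  (forall i j, i != j -> bil (row i V) (row j V) = 0) ->
  (forall a, phi a = \sum_i V i a * bil (row i V) (row i V)) ->
  forall b, \sum_a \sum_d (\sum_i V i a * V i b * V i d) * phi a * phi d =
            \sum_i bil (row i V) (row i V) ^+ 4 * V i b.
Proof.
move=> horth hphi b.
set lam := fun i => bil (row i V) (row i V).
have h1 : forall i, \sum_a V i a * phi a = lam i ^+ 2.
  move=> i.
  rewrite (eq_bigr (fun a => \sum_j lam j * (row i V 0 a * row j V 0 a))); last first.
    by move=> a _; rewrite hphi mulr_sumr; apply: eq_bigr => j _; rewrite !mxE /lam; ring.
  rewrite exchange_big /= (bigD1 i) //= [X in _ + X]big1 ?addr0; last first.
    by move=> j hj; rewrite -mulr_sumr -/(bil (row i V) (row j V)) horth ?mulr0 // eq_sym.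
  by rewrite -mulr_sumr -/(bil (row i V) (row i V)) expr2.
rewrite (eq_bigr (fun a => \sum_i \sum_d V i b * (V i a * phi a) * (V i d * phi d))); last first.
  move=> a _; rewrite (eq_bigr (fun d => \sum_i V i b * (V i a * phi a) * (V i d * phi d))).
    by rewrite exchange_big.
  by move=> d _; rewrite !mulr_suml; apply: eq_bigr => i _; ring.
rewrite exchange_big; apply: eq_bigr => i _.
rewrite (eq_bigr (fun a => V i b * (V i a * phi a) * \sum_d (V i d * phi d))); last first.
  by move=> a _; rewrite mulr_sumr.
by rewrite -mulr_suml -mulr_sumr h1 -/(lam i); ring.
Qed.

Lemma notSODECO3 (C : numClosedFieldType) n (w u : 'rV[C]_n) a0 :
  bil w w = 0 -> bil u w = 2%:R -> w 0 a0 != 0 -> ~ SODECO (S3 w u).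
Proof.
move=> hww huw hw0 [k [V [hfree [horth hS]]]].
pose phi a := \sum_b S3 w u a b b.
have phiW : forall a, phi a = 4%:R * w 0 a.
  move=> a; rewrite /phi /S3.
  rewrite (eq_bigr (fun b => w 0 a * (w 0 b * u 0 b) + w 0 a * (u 0 b * w 0 b)
                            + u 0 a * (w 0 b * w 0 b))); last by move=> b _; ring.
  rewrite !big_split /= -!mulr_sumr -/(bil w u) -/(bil u w) -/(bil w w) (bilC w u) huw hww.
  by rewrite -[4%N]/(2 + 2)%N natrD; ring.
have phiV : forall a, phi a = \sum_i V i a * bil (row i V) (row i V).
  move=> a; rewrite /phi (eq_bigr (fun b => \sum_i V i a * V i b * V i b)); last first.
    by move=> b _; rewrite hS.
  rewrite exchange_big; apply: eq_bigr => i _; rewrite /bil mulr_sumr.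
  by apply: eq_bigr => b _; rewrite !mxE mulrA.
have psi0 : forall b, \sum_a \sum_d S3 w u a b d * phi a * phi d = 0.
  move=> b.
  rewrite (eq_bigr (fun a => 16%:R * w 0 b * bil u w * (w 0 a * w 0 a))); last first.
    move=> a _.
    rewrite (eq_bigr (fun d => 16%:R * w 0 a * w 0 a * w 0 b * (u 0 d * w 0 d) +
               16%:R * w 0 a * (w 0 a * u 0 b + u 0 a * w 0 b) * (w 0 d * w 0 d))); last first.
      move=> d _; rewrite !phiW /S3 -[16%N]/(4 * 4)%N natrM; ring.
    rewrite big_split /= -!mulr_sumr -/(bil u w) -/(bil w w) hww mulr0 addr0; ring.
  by rewrite -mulr_sumr -/(bil w w) hww mulr0.
set lam := fun i => bil (row i V) (row i V).
have lam4 : forall b, \sum_i lam i ^+ 4 * V i b = 0.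
  move=> b; rewrite /lam -(sodeco_psi horth phiV b) -[RHS](psi0 b).
  by apply: eq_bigr => a _; apply: eq_bigr => d _; rewrite hS.
have hrow : (\row_i (lam i ^+ 4)) *m V = 0 *m V.
  apply/rowP => b; rewrite mul0mx mxE [(0 : 'rV_n) 0 b]mxE -[RHS](lam4 b); apply: eq_bigr => i _.
  by rewrite mxE.
have hl := row_free_inj hfree hrow.
have lam0 : forall i, lam i = 0.
  move=> i; have := congr1 (fun M : 'rV_k => M 0 i) hl; rewrite !mxE /=.
  by move/eqP; rewrite expf_eq0 /= => /eqP.
have := phiV a0; rewrite big1 => [|i _]; last by rewrite -/(lam i) lam0 mulr0.
rewrite phiW => /eqP; rewrite mulf_eq0 pnatr_eq0 /= (negbTE hw0) //.
Qed.

Lemma closure3 (C : numClosedFieldType) n (w u : 'rV[C]_n) :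
  (2 <= n)%N -> bil w w = 0 -> bil u u = 0 -> bil u w = 2%:R ->
  eclosure (@OW C n) (S3 w u).
Proof.
move=> hn hww huu huw eps he.
pose Ku := \sum_a \sum_b \sum_d `|u 0 a * u 0 b * u 0 d|.
have Ku0 : 0 <= Ku.
  by apply: sumr_ge0 => a _; apply: sumr_ge0 => b _; apply: sumr_ge0.
have [t [t0 t1 tK]] := small_t he Ku0.
have tn0 : t != 0 by rewrite gt_eqF.
pose s (i : 'I_2) := if i == ord0 then t else - t.
pose c (i : 'I_2) := w + s i *: u.
pose mu (i : 'I_2) := if i == ord0 then (2%:R * t)^-1 else - (2%:R * t)^-1.
exists (fun a b d => \sum_(i < 2) mu i * c i 0 a * c i 0 b * c i 0 d); split.
  apply: OW_of_orth => //.
    move=> i j hij; rewrite /c bil_lin hww huu (bilC w u) huw.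
    move: i j hij; do 2![case=> [[|[|//]] ?]] => //= _; rewrite /s /=; ring.
  move=> i; rewrite /c bil_lin hww huu (bilC w u) huw.
  have -> : 0 + s i * 2%:R + s i * 2%:R + s i * s i * 0 = 4%:R * s i.
    by rewrite -[4%N]/(2 + 2)%N natrD; ring.
  rewrite mulf_neq0 ?pnatr_eq0 // /s; case: ifP => _ //; by rewrite oppr_eq0.
move=> a b d.
have -> : S3 w u a b d - \sum_(i < 2) mu i * c i 0 a * c i 0 b * c i 0 d =
          - (t * (t * (u 0 a * u 0 b * u 0 d))).
  rewrite 2!big_ord_recl big_ord0 /mu /c /s /S3 /= !mxE.
  by field.
rewrite normrN normrM (gtr0_norm t0) normrM (gtr0_norm t0).
apply: le_lt_trans tK; apply: ler_wpM2l; first exact: ltW.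
apply: le_trans (ler_piMl _ t1) _ => //.
apply: le_trans (le_sum_term a _) => [|a'].
  apply: le_trans (le_sum_term b _) => [|b'].
    by apply: le_sum_term.
  by apply: sumr_ge0.
by apply: sumr_ge0 => ? _; apply: sumr_ge0.
Qed.

Lemma sum2' (C : numClosedFieldType) n' (f : 'I_n'.+2 -> C) (g : nat -> C) :
  (forall j, f j = g (val j)) -> (forall j, (2 <= j)%N -> g j = 0) ->
  \sum_j f j = g 0%N + g 1%N.
Proof. by move=> hf hg; rewrite (eq_bigr (fun j => g (val j))) // (@sum2 _ n' g hg). Qed.

Definition wvec (C : numClosedFieldType) n : 'rV[C]_n :=
  \row_(j < n) (if val j == 0%N then 1 else if val j == 1%N then 'i else 0).
Definition uvec (C : numClosedFieldType) n : 'rV[C]_n :=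
  \row_(j < n) (if val j == 0%N then 1 else if val j == 1%N then - 'i else 0).

Lemma concrete_wu (C : numClosedFieldType) n' :
  [/\ bil (wvec C n'.+2) (wvec C n'.+2) = 0, bil (uvec C n'.+2) (uvec C n'.+2) = 0,
      bil (uvec C n'.+2) (wvec C n'.+2) = 2%:R & (wvec C n'.+2) 0 ord0 = 1].
Proof.
split.
- rewrite /bil (@sum2' _ n' _ (fun j => (if j == 0%N then 1 else if j == 1%N then 'i else 0) *
                              (if j == 0%N then 1 else if j == 1%N then 'i else 0))).
  + by rewrite /= mulr1 -expr2 sqrCi subrr.
  + by move=> j; rewrite !mxE.
  + by case=> [|[|j]] //=; rewrite mulr0.
- rewrite /bil (@sum2' _ n' _ (fun j => (if j == 0%N then 1 else if j == 1%N then - 'i else 0) *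
                              (if j == 0%N then 1 else if j == 1%N then - 'i else 0))).
  + by rewrite /= mulr1 mulrNN -expr2 sqrCi subrr.
  + by move=> j; rewrite !mxE.
  + by case=> [|[|j]] //=; rewrite mulr0.
- rewrite /bil (@sum2' _ n' _ (fun j => (if j == 0%N then 1 else if j == 1%N then - 'i else 0) *
                              (if j == 0%N then 1 else if j == 1%N then 'i else 0))).
  + by rewrite /= mulr1 mulNr -expr2 sqrCi opprK.
  + by move=> j; rewrite !mxE.
  + by case=> [|[|j]] //=; rewrite mulr0.
- by rewrite mxE.
Qed.

Unset Implicit Arguments.

Theorem theorem17 (C : numClosedFieldType) (n : nat) (hn : (1 <= n)%N) :
  ((forall S : tensor3 C n, OW S -> SODECO S) /\
   (forall S : tensor3 C n, SODECO S -> eclosure (@OW C n) S)) /\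
  ((2 <= n)%N ->
   (exists S : tensor3 C n, SODECO S /\ ~ OW S) /\
   (exists S : tensor3 C n, eclosure (@OW C n) S /\ ~ SODECO S)).
Proof.
split; first by split; [exact: part1 | exact: part2].
case: n hn => [|[|n']] // _ hn2.
have [hww huu huw hw0] := concrete_wu C n'.
have w0 : wvec C n'.+2 != 0.
  by apply/eqP => h; move: hw0; rewrite h mxE => /eqP; rewrite eq_sym oner_eq0.
split.
  exists (fun a b d => wvec C n'.+2 0 a * wvec C n'.+2 0 b * wvec C n'.+2 0 d).
  split; first exact: sodeco_cube.
  by apply: (notOW_cube (a0 := ord0) hww); rewrite hw0 oner_neq0.
exists (S3 (wvec C n'.+2) (uvec C n'.+2)); split.
  exact: closure3.
by apply: (notSODECO3 (a0 := ord0) hww huw); rewrite hw0 oner_neq0.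
Qed.
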